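(* Let $O,O'$ be sets of Boolean functions with $O\preceq O'$, and let $\textsc{prop}$ be a finite set of propositional variables. Then $\mathrm{PL}_O[\textsc{prop}]\leq_{pc}\mathrm{PL}_{O'}[\textsc{prop}]$.
   Context: Boolean functions are maps $\{0,1\}^n\to\{0,1\}$, $n\ge1$ (constants as constant unary functions); $O\preceq O'$ means the clone generated by $O$ (smallest set containing $O$ and all projections, closed under composition) is contained in that generated by $O'$. $\mathrm{PL}_O[\textsc{prop}]$ is the set of formulas $\phi::=x\mid f(\phi_1,\dots,\phi_n)$ with $x\in\textsc{prop}$ and $f\in O$. It is viewed as the concept class whose concepts are these formulas, whose examples are the truth assignments $V:\textsc{prop}\to\{0,1\}$, and where $\lambda(\phi)$ is the set of assignments satisfying $\phi$. For concept classes $\mathcal{C}_i=(C_i,E_i,\lambda_i)$, $\mathcal{C}_1\leq_{pc}\mathcal{C}_2$ means there are $f:C_1\to C_2$ and $h:E_1\to E_2$ such that (i) for all $c\in C_1,e\in E_1$: $e\in\lambda_1(c)$ iff $h(e)\in\lambda_2(f(c))$; and (ii) for each $e\in E_2$, either $e\in\lambda_2(f(c))$ for all $c\in C_1$, or for no $c\in C_1$, or there is $e'\in E_1$ with $\{c\mid e\in\lambda_2(f(c))\}=\{c\mid e'\in\lambda_1(c)\}$. *)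

(* Defs.v *)
From mathcomp Require Import all_boot.
Set Implicit Arguments. Unset Strict Implicit. Unset Printing Implicit Defensive.

(* A Boolean function of arity (bf_ar f).+1 >= 1 : {0,1}^n -> {0,1}. *)
Record bfun := BFun { bf_ar : nat; bf_fn : {ffun {ffun 'I_bf_ar.+1 -> bool} -> bool} }.

Definition bfset := bfun -> Prop.

Definition proj_bf (m : nat) (i : 'I_m.+1) : bfun :=
  @BFun m [ffun x : {ffun 'I_m.+1 -> bool} => x i].

Definition comp_bf (f : bfun) (m : nat)
  (gs : 'I_(bf_ar f).+1 -> {ffun {ffun 'I_m.+1 -> bool} -> bool}) : bfun :=
  @BFun m [ffun x : {ffun 'I_m.+1 -> bool} => bf_fn f [ffun i => gs i x]].

Inductive clone (O : bfset) : bfset :=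
| clone_base f : O f -> clone O f
| clone_proj m (i : 'I_m.+1) : clone O (proj_bf i)
| clone_comp (f : bfun) (m : nat)
    (gs : 'I_(bf_ar f).+1 -> {ffun {ffun 'I_m.+1 -> bool} -> bool}) :
    clone O f -> (forall i, clone O (@BFun m (gs i))) -> clone O (comp_bf gs).

Definition clone_le (O O' : bfset) : Prop := forall f, clone O f -> clone O' f.

Inductive form (P : Type) : Type :=
| FVar : P -> form P
| FApp : bfun -> seq (form P) -> form P.

Fixpoint wf_form (P : Type) (O : bfset) (phi : form P) : Prop :=
  match phi with
  | FVar _ => True
  | FApp f args => [/\ O f, size args = (bf_ar f).+1 &
                      foldr (fun a acc => wf_form O a /\ acc) True args]
  end.

Fixpoint eval_form (P : Type) (V : P -> bool) (phi : form P) : bool :=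
  match phi with
  | FVar x => V x
  | FApp f args =>
      let vs := map (eval_form V) args in
      bf_fn f [ffun i : 'I_(bf_ar f).+1 => nth false vs i]
  end.

(* Concept classes (C, E, lambda); lam c e means e \in lambda(c) *)
Record concept_class := ConceptClass {
  cc_C : Type; cc_E : Type; cc_lam : cc_C -> cc_E -> Prop }.

Definition PL (O : bfset) (P : Type) : concept_class :=
  @ConceptClass {phi : form P | wf_form O phi} (P -> bool)
    (fun phi V => eval_form V (proj1_sig phi) = true).

Definition pc_reducible (K1 K2 : concept_class) : Prop :=
  exists (f : cc_C K1 -> cc_C K2) (h : cc_E K1 -> cc_E K2),
    (forall c e, cc_lam c e <-> cc_lam (f c) (h e)) /\
    (forall e : cc_E K2,
       (forall c, cc_lam (f c) e) \/ (forall c, ~ cc_lam (f c) e) \/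
       exists e' : cc_E K1, forall c, cc_lam (f c) e <-> cc_lam c e').

(* Main.v *)
Require Import Defs.
From mathcomp Require Import all_boot.
From Stdlib Require Import ClassicalEpsilon.
Set Implicit Arguments. Unset Strict Implicit.

Section S.
Variable P : Type.

Lemma foldr_nth (Q : form P -> Prop) (s : seq (form P)) d :
  foldr (fun a acc => Q a /\ acc) True s <-> forall i, i < size s -> Q (nth d s i).
Proof.
elim: s => [|a s IH] /=; first by split.
split.
- case=> Ha /IH Hs [|i] //= Hi; exact: Hs.
- move=> H; split; first exact: (H 0).
  apply/IH => i Hi; exact: (H i.+1).
Qed.

Definition form_ind2 (Q : form P -> Prop)
  (HV : forall x, Q (FVar x))
  (HA : forall f args, foldr (fun a acc => Q a /\ acc) True args -> Q (FApp f args)) :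
  forall phi, Q phi :=
  fix F phi := match phi with
  | FVar x => HV x
  | FApp f args => HA f args
      ((fix G (s : seq (form P)) : foldr (fun a acc => Q a /\ acc) True s :=
         match s with [::] => I | a :: s' => conj (F a) (G s') end) args)
  end.

Definition expressible (O' : bfset) (g : bfun) : Prop :=
  forall a : 'I_(bf_ar g).+1 -> form P, (forall i, wf_form O' (a i)) ->
  exists psi, wf_form O' psi /\
    forall V, eval_form V psi = bf_fn g [ffun i => eval_form V (a i)].

Lemma clone_expr (O' : bfset) g : clone O' g -> expressible O' g.
Proof.
elim=> {g}.
- move=> f Hf a Ha; exists (FApp f [seq a i | i <- enum 'I_(bf_ar f).+1]).
  split.
  + rewrite /= size_map size_enum_ord; split => //.
    apply/(foldr_nth _ _ (a ord0)) => i; rewrite size_map size_enum_ord => Hi.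
    rewrite (nth_map (Ordinal Hi)) ?size_enum_ord //.
  + move=> V /=; apply: congr1; apply/ffunP => i; rewrite !ffunE.
    rewrite -map_comp (nth_map i) ?size_enum_ord //= nth_ord_enum //.
- move=> m i a Ha; exists (a i); split => // V /=; by rewrite !ffunE.
- move=> f m gs _ IHf _ IHg a Ha.
  have Hc := fun i => constructive_indefinite_description _ (IHg i a Ha).
  pose psi i := proj1_sig (Hc i).
  have [Hw He] : (forall i, wf_form O' (psi i)) /\
       (forall i V, eval_form V (psi i) = gs i [ffun j => eval_form V (a j)]).
    by split => i; case: (proj2_sig (Hc i)) => // _ H V; rewrite H.
  have [chi [Hchi Echi]] := IHf psi Hw.
  exists chi; split => // V; rewrite Echi /= ffunE; apply: congr1.
  by apply/ffunP => i; rewrite !ffunE He.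
Qed.

Lemma translate (O O' : bfset) : clone_le O O' ->
  forall phi : form P, wf_form O phi ->
  exists psi, wf_form O' psi /\ forall V, eval_form V psi = eval_form V phi.
Proof.
move=> Hle; elim/form_ind2.
- move=> x _; exists (FVar x); by split.
- move=> f args IH [Hf Hs Hw].
  have Hex := clone_expr (Hle f (clone_base Hf)).
  pose d := FApp f args.
  have H1 := proj1 (foldr_nth _ _ d) IH.
  have H2 := proj1 (foldr_nth _ _ d) Hw.
  have Hi : forall i : 'I_(bf_ar f).+1, i < size args by move=> i; rewrite Hs.
  have Hc := fun i : 'I_(bf_ar f).+1 =>
     constructive_indefinite_description _ (H1 i (Hi i) (H2 i (Hi i))).
  pose psi i := proj1_sig (Hc i).
  have [Hw' He] : (forall i, wf_form O' (psi i)) /\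
       (forall i V, eval_form V (psi i) = eval_form V (nth d args i)).
    by split => i; case: (proj2_sig (Hc i)) => // _ H V; rewrite H.
  have [chi [Hchi Echi]] := Hex psi Hw'.
  exists chi; split => // V; rewrite Echi /=; apply: congr1.
  apply/ffunP => i; rewrite !ffunE He (nth_map d) //.
Qed.
End S.

Theorem propositionA6 (O O' : bfset) (P : finType) :
  clone_le O O' -> pc_reducible (PL O P) (PL O' P).
Proof.
move=> Hle.
have T := fun c : {phi : form P | wf_form O phi} =>
  constructive_indefinite_description _ (translate Hle (proj2_sig c)).
exists (fun c => exist _ (proj1_sig (T c)) (proj1 (proj2_sig (T c)))).
exists id; split.
- move=> c e /=; by rewrite (proj2 (proj2_sig (T c))).
- move=> e; right; right; exists e => c /=; by rewrite (proj2 (proj2_sig (T c))).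
Qed.
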